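(* Let $d\ge1$, $p\in\mathcal H(n,d)$, let $P$ be the induced homogeneous polynomial, write $P=S\cdot Q$, and let $K$ be the support of the Newton diagram of $Q$. Then $K$ is connected, contains $(0,\dots,0)$, and has size $d$.
   Context: $s(x)=x_1+\dots+x_n$. $\mathcal H(n,d)$ is the set of $p\in\mathbb R[x_1,\dots,x_n]$ of degree $d$ with all coefficients nonnegative and $p(x)=1$ whenever $s(x)=1$. Writing $p=\sum_{k=0}^dp_k$ with $p_k$ homogeneous of degree $k$, the induced homogeneous polynomial is $P(X_0,\dots,X_n)=\sum_{k=0}^dp_k(X_1,\dots,X_n)(-X_0)^{d-k}-(-X_0)^d$; it vanishes where $S(X)=X_0+X_1+\dots+X_n=0$, so $P=SQ$ with $Q$ homogeneous. The Newton diagram of $Q$ (with $\deg P=d$) is the function $D\colon\mathbb Z^n\to\{0,P,N\}$ assigning to $m$ the value $P$, $0$, or $N$ according as the coefficient of $X_0^{d-1-|m|}X_1^{m_1}\cdots X_n^{m_n}$ in $Q$ is positive, zero (including when some exponent is negative), or negative, where $|m|=m_1+\dots+m_n$; its support is $K=D^{-1}(\{P,N\})$. With $e_1,\dots,e_n$ the standard basis, two distinct points $m,m'$ are adjacent if $m-m'\in\{\pm e_j\}\cup\{e_j-e_k:j\ne k\}$; $K$ is connected if any two points of $K$ are joined by a path of successively adjacent points of $K$. The size of $K$ is $k-|a|+1$ where $k=\max_{m\in K}|m|$ and $a_j=\min_{m\in K}m_j$. *)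

(* Defs.v *)
From HB Require Import structures.
From mathcomp Require Import all_boot all_order all_algebra.
Set Implicit Arguments. Unset Strict Implicit. Unset Printing Implicit Defensive.
Import Order.TTheory GRing.Theory Num.Theory.
Local Open Scope ring_scope.

(* Polynomials are represented by their coefficient functions on monomials.
   A monomial in n variables X_0..X_{n-1} is its exponent vector. *)
Definition mono (n : nat) := {ffun 'I_n -> nat}.
Definition mdeg (n : nat) (m : mono n) : nat := (\sum_i m i)%N.

(* Evaluation of a polynomial (coefficients c) all of whose monomials have
   total degree <= d (hence every exponent <= d). *)
Definition meval (R : comNzRingType) (n d : nat) (c : mono n -> R)
    (x : 'I_n -> R) : R :=
  \sum_(m : {ffun 'I_n -> 'I_d.+1})
     c [ffun i => nat_of_ord (m i)] * \prod_(i < n) x i ^+ m i.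

Definition in_H (R : realFieldType) (n d : nat) (c : mono n -> R) : Prop :=
  [/\ (forall m : mono n, (d < mdeg m)%N -> c m = 0),
      (exists m : mono n, mdeg m = d /\ c m != 0),
      (forall m : mono n, 0 <= c m)
    & (forall x : 'I_n -> R, \sum_i x i = 1 -> meval d c x = 1)].

(* Monomials in X_0, X_1..X_n: index ord0 is X_0, lift ord0 i is X_{i+1}. *)
Definition split0 (n : nat) (M : mono n.+1) : mono n :=
  [ffun i => M (lift ord0 i)].

(* Coefficient of X_0^{M_0} X^m in
   P = sum_{k=0}^d p_k(X) (-X_0)^{d-k} - (-X_0)^d. *)
Definition Pcoef (R : realFieldType) (n d : nat) (c : mono n -> R)
    (M : mono n.+1) : R :=
  let m := split0 M in
  if (M ord0 + mdeg m == d)%N then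
    (-1) ^+ (d - mdeg m) * c m - (if mdeg m == 0%N then (-1) ^+ d else 0)
  else 0.

(* Coefficient of S*Q at M, where S = X_0 + ... + X_n. *)
Definition decr (n : nat) (M : mono n) (j : 'I_n) : mono n :=
  [ffun i => if i == j then (M i).-1 else M i].
Definition SQcoef (R : realFieldType) (n : nat) (q : mono n.+1 -> R)
    (M : mono n.+1) : R :=
  \sum_(j < n.+1 | (0 < M j)%N) q (decr M j).

Definition homogeneous (R : realFieldType) (n : nat) (q : mono n -> R)
    (k : nat) : Prop :=
  forall M : mono n, mdeg M != k -> q M = 0.

Definition pt (n : nat) := {ffun 'I_n -> int}.
Definition pdeg (n : nat) (m : pt n) : int := \sum_i m i.

(* The monomial X_0^{d-1-|m|} X^m (meaningful when m >= 0, |m| <= d-1). *)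
Definition Qmono (n d : nat) (m : pt n) : mono n.+1 :=
  [ffun i => match unlift ord0 i with
             | None => (d.-1 - absz (pdeg m))%N
             | Some j => absz (m j) end].

Definition Qcoef_at (R : realFieldType) (n d : nat) (q : mono n.+1 -> R)
    (m : pt n) : R :=
  if [forall i, 0 <= m i] && (pdeg m <= (d.-1)%:Z) then q (Qmono d m) else 0.

Inductive sgn3 := Zero3 | Pos3 | Neg3.

Definition newton (R : realFieldType) (n d : nat) (q : mono n.+1 -> R)
    (m : pt n) : sgn3 :=
  let a := Qcoef_at d q m in
  if 0 < a then Pos3 else if a < 0 then Neg3 else Zero3.

Definition newton_support (R : realFieldType) (n d : nat)
    (q : mono n.+1 -> R) : pred (pt n) :=
  fun m => match newton d q m with Zero3 => false | _ => true end.

Definition evec (n : nat) (j : 'I_n) : pt n := [ffun i => Posz (i == j)].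
Definition pdif (n : nat) (m m' : pt n) : pt n := [ffun i => m i - m' i].

Definition adjacent (n : nat) : rel (pt n) := fun m m' =>
  (m != m') &&
  ([exists j, (pdif m m' == evec j) || (pdif m m' == [ffun i => - evec j i])]
   || [exists j, exists k,
         (j != k) && (pdif m m' == [ffun i => evec j i - evec k i])]).

Definition connected (n : nat) (K : pred (pt n)) : Prop :=
  forall x y, K x -> K y ->
    exists s : seq (pt n), [/\ path (@adjacent n) x s, last x s = y & all K s].

Definition has_size (n : nat) (K : pred (pt n)) (sz : int) : Prop :=
  exists (k : int) (a : pt n),
    [/\ (exists2 m, K m & pdeg m = k),
        (forall m, K m -> pdeg m <= k),
        (forall j, (exists2 m, K m & m j = a j) /\
                   (forall m, K m -> a j <= m j))
      & k - pdeg a + 1 = sz].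

(* Main.v *)
Require Import Defs.
From HB Require Import structures.
From mathcomp Require Import all_boot all_order all_algebra.
From Stdlib Require Import ClassicalEpsilon.
Import Order.TTheory GRing.Theory Num.Theory.
Local Open Scope ring_scope.
Set Implicit Arguments. Unset Strict Implicit. Unset Printing Implicit Defensive.

Definition pb (P : Prop) : bool :=
  if excluded_middle_informative P then true else false.
Lemma pbP (P : Prop) : reflect P (pb P).
Proof. by rewrite /pb; case: excluded_middle_informative => h; constructor. Qed.

Definition pt_of (n : nat) (M : mono n.+1) : pt n :=
  [ffun i => Posz (M (lift ord0 i))].

Lemma mdegS (n : nat) (M : mono n.+1) :
  mdeg M = (M ord0 + \sum_i M (lift ord0 i))%N.
Proof. by rewrite /mdeg big_ord_recl. Qed.

Lemma pdeg_pt_of (n : nat) (M : mono n.+1) :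
  pdeg (pt_of M) = Posz (\sum_i M (lift ord0 i))%N.
Proof.
rewrite /pdeg -natz natr_sum; apply: eq_bigr => i _; by rewrite ffunE natz.
Qed.

Lemma le_mdeg (n : nat) (M : mono n) i : (M i <= mdeg M)%N.
Proof. by rewrite /mdeg (bigD1 i) //= leq_addr. Qed.

Lemma newton_neq0 (R : realFieldType) (n d : nat) (q : mono n.+1 -> R) m :
  newton_support d q m = (Qcoef_at d q m != 0).
Proof.
rewrite /newton_support /newton.
case: ifP => h; first by rewrite gt_eqF.
case: ifP => h2; first by rewrite lt_eqF.
have := lt_total (x:=Qcoef_at d q m) (y:=0); rewrite h h2.
by case: eqP => // _; apply.
Qed.

Lemma QB (R : realFieldType) (n d : nat) (q : mono n.+1 -> R) (M : mono n.+1) :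
  homogeneous q d.-1 -> q M != 0 ->
  newton_support d q (pt_of M) /\ Qmono d (pt_of M) = M.
Proof.
move=> hom qM.
have hd : mdeg M = d.-1 by apply/eqP; apply: contraNT qM => /hom ->.
have hQ : Qmono d (pt_of M) = M.
  apply/ffunP => i; rewrite ffunE.
  case: unliftP => [j ->|->]; first by rewrite ffunE.
  by rewrite pdeg_pt_of /= -hd mdegS addnK.
split=> //; rewrite newton_neq0 /Qcoef_at.
have -> : [forall i, 0 <= pt_of M i] by apply/forallP => i; rewrite ffunE.
rewrite pdeg_pt_of -hd mdegS lez_nat leq_addl /= hQ //.
Qed.

Lemma QA (R : realFieldType) (n d : nat) (q : mono n.+1 -> R) (m : pt n) :
  newton_support d q m ->
  [/\ forall i, 0 <= m i, pdeg m <= (d.-1)%:Z, q (Qmono d m) != 0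
    & pt_of (Qmono d m) = m].
Proof.
rewrite newton_neq0 /Qcoef_at.
case: ifP => [/andP [/forallP h1 h2] h3|]; last by rewrite eqxx.
split=> //; apply/ffunP => i; rewrite !ffunE liftK /=.
by have := h1 i; case: (m i).
Qed.

Lemma pdif_sym (n : nat) (m m' : pt n) : pdif m' m = [ffun i => - pdif m m' i].
Proof. by apply/ffunP => i; rewrite !ffunE opprB. Qed.

Lemma adjacent_sym (n : nat) (m m' : pt n) : adjacent m m' -> adjacent m' m.
Proof.
case/andP=> ne /orP [/existsP [j /orP [/eqP h|/eqP h]]|/existsP [j /existsP [k /andP [jk /eqP h]]]];
  rewrite /adjacent eq_sym ne /= pdif_sym h.
- apply/orP; left; apply/existsP; exists j; apply/orP; right; apply/eqP/ffunP => i; by rewrite !ffunE.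
- apply/orP; left; apply/existsP; exists j; apply/orP; left; apply/eqP/ffunP => i; by rewrite !ffunE opprK.
- apply/orP; right; apply/existsP; exists k; apply/existsP; exists j; rewrite eq_sym jk /=.
  by apply/eqP/ffunP => i; rewrite !ffunE opprB.
Qed.

Lemma pdif_ne (n : nat) (m m' : pt n) i : pdif m m' i != 0 -> m != m'.
Proof. by apply: contraNN => /eqP ->; rewrite ffunE subrr. Qed.

Lemma pdif_decr (n : nat) (M : mono n.+1) j k : (0 < M j)%N -> (0 < M k)%N ->
  pdif (pt_of (decr M j)) (pt_of (decr M k)) =
  [ffun i => (lift ord0 i == k)%:Z - (lift ord0 i == j)%:Z].
Proof.
move=> hj hk; apply/ffunP => i; rewrite /decr !ffunE.
set x := lift ord0 i.
have [ej|nj] := eqVneq x j; have [ek|nk] := eqVneq x k => /=.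
- by rewrite subrr.
- by rewrite ej; case: (M j) hj => //= t _; rewrite -addn1 PoszD opprD addrA subrr.
- by rewrite ek; case: (M k) hk => //= t _; rewrite -addn1 PoszD addrAC subrr add0r subr0.
- by rewrite !subrr.
Qed.

Lemma adj_decr (n : nat) (M : mono n.+1) j k : j != k -> (0 < M j)%N -> (0 < M k)%N ->
  adjacent (pt_of (decr M j)) (pt_of (decr M k)).
Proof.
move=> jk hj hk; rewrite /adjacent pdif_decr //.
have L0 : forall t : 'I_n, (lift ord0 t == ord0) = false.
  by move=> t; apply/negbTE; rewrite eq_sym neq_lift.
case: (unliftP ord0 j) => [j' ej|ej]; case: (unliftP ord0 k) => [k' ek|ek].
- have jk' : j' != k' by apply: contraNN jk => /eqP e; rewrite ej ek e.
  apply/andP; split.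
    apply: (@pdif_ne _ _ _ k'); rewrite pdif_decr // ffunE ej ek eqxx.
    by rewrite (inj_eq lift_inj) [k' == j']eq_sym (negbTE jk').
  apply/orP; right; apply/existsP; exists k'; apply/existsP; exists j'.
  rewrite eq_sym jk' /=; apply/eqP/ffunP => i; rewrite !ffunE ej ek !(inj_eq lift_inj).
  by [].
- apply/andP; split.
    apply: (@pdif_ne _ _ _ j'); rewrite pdif_decr // ffunE ej ek eqxx.
    by rewrite L0.
  apply/orP; left; apply/existsP; exists j'; apply/orP; right.
  apply/eqP/ffunP => i; rewrite !ffunE ej ek (inj_eq lift_inj) L0.
  by rewrite sub0r.
- apply/andP; split.
    apply: (@pdif_ne _ _ _ k'); rewrite pdif_decr // ffunE ej ek eqxx.
    by rewrite L0.
  apply/orP; left; apply/existsP; exists k'; apply/orP; left.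
  apply/eqP/ffunP => i; rewrite !ffunE ej ek (inj_eq lift_inj) L0.
  by rewrite subr0.
- by rewrite ej ek eqxx in jk.
Qed.

Lemma path_rev (T : Type) (e : rel T) (P : pred T) (a : T) (s : seq T) :
  (forall x y, e x y -> e y x) -> P a -> path e a s -> all P s ->
  exists s', [/\ path e (last a s) s', last (last a s) s' = a & all P s'].
Proof.
move=> sym; elim: s a => [|z s IH] a Pa /=; first by exists [::].
case/andP=> eaz pz /andP [Pz As].
have [s' [p1 l1 a1]] := IH z Pz pz As.
exists (rcons s' a); rewrite rcons_path p1 l1 last_rcons all_rcons Pa a1 sym //.
Qed.

Definition tm (n d : nat) (b : {ffun 'I_n.+1 -> 'I_d.+1}) : mono n.+1 :=
  [ffun i => nat_of_ord (b i)].
Definition wt (R : realFieldType) (n d : nat) (b : {ffun 'I_n.+1 -> 'I_d.+1}) : R :=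
  (- (n%:R)) ^+ (b ord0).
Definition sj (R : realFieldType) (n : nat) (j : 'I_n.+1) : R :=
  if j == ord0 then - n%:R else 1.
Definition incb (n d : nat) (j : 'I_n.+1) (b : {ffun 'I_n.+1 -> 'I_d.+1}) :
  {ffun 'I_n.+1 -> 'I_d.+1} := [ffun i => if i == j then inord (b i).+1 else b i].
Definition decb (n d : nat) (j : 'I_n.+1) (b : {ffun 'I_n.+1 -> 'I_d.+1}) :
  {ffun 'I_n.+1 -> 'I_d.+1} := [ffun i => if i == j then inord (b i).-1 else b i].

Lemma val_inord (d m : nat) : nat_of_ord (inord m : 'I_d.+1) = if (m < d.+1)%N then m else 0%N.
Proof. by rewrite /inord val_insubd. Qed.

Lemma LSG (R : realFieldType) (n d : nat) (G : mono n.+1 -> R) :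
  (forall N, G N != 0 -> (mdeg N < d)%N) ->
  \sum_(b : {ffun 'I_n.+1 -> 'I_d.+1}) SQcoef G (tm b) * wt R b = 0.
Proof.
move=> hG.
rewrite /SQcoef.
under eq_bigr => b _ do rewrite big_mkcond mulr_suml.
rewrite exchange_big /=.
transitivity (\sum_(j < n.+1) sj R j * \sum_(b : {ffun 'I_n.+1 -> 'I_d.+1}) G (tm b) * wt R b).
  apply: eq_bigr => j _.
  under eq_bigr => b _ do rewrite (fun_if (fun x => x * wt R b)) mul0r.
  rewrite -big_mkcond /=.
  rewrite (reindex_onto (incb j) (decb j)); last first.
    move=> b; rewrite ffunE => hb; apply/ffunP => i; rewrite !ffunE.
    case: eqP => [->|//]; apply: val_inj; rewrite /= !val_inord.
    have h1 : ((b j).-1 < d.+1)%N by rewrite (leq_ltn_trans (leq_pred _)). 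
    by rewrite h1 prednK // ltn_ord.
  rewrite mulr_sumr big_mkcond /=; apply: eq_bigr => N _.
  case: (ltnP (N j) d) => hN.
    have e1 : nat_of_ord (inord (N j).+1 : 'I_d.+1) = (N j).+1 by rewrite val_inord ltnS hN.
    have -> : (0 < tm (incb j N) j)%N by rewrite !ffunE eqxx e1.
    have -> : decb j (incb j N) == N.
      apply/eqP/ffunP => i; rewrite !ffunE; case: eqP => [->|//].
      by apply: val_inj; rewrite /= val_inord e1 /= ltn_ord.
    have -> : decr (tm (incb j N)) j = tm N.
      apply/ffunP => i; rewrite !ffunE; case: eqP => [->|//].
      by rewrite e1.
    rewrite /= /wt /sj ffunE; case: eqP => [->|/eqP nj]; last by rewrite eq_sym (negbTE nj) mul1r.
    by rewrite eqxx e1 exprS mulrCA.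
  have -> : (0 < tm (incb j N) j)%N = false.
    by rewrite !ffunE eqxx val_inord ltnS (ltnNge (N j)) hN.
  case: (eqVneq (G (tm N)) 0) => [->|/hG hl]; first by rewrite mul0r mulr0.
  by have := leq_ltn_trans (le_mdeg _ j) hl; rewrite ffunE ltnNge hN.
rewrite -mulr_suml big_ord_recl /sj eqxx.
have -> : \sum_(i < n) (if lift ord0 i == ord0 then - n%:R else 1) = \sum_(i < n) (1 : R).
  apply: eq_bigr => i _.
  by [].
by rewrite sumr_const card_ord addNr mul0r.
Qed.

Lemma mdeg_split0 (n : nat) (M : mono n.+1) :
  mdeg M = (M ord0 + mdeg (split0 M))%N.
Proof. by rewrite mdegS /mdeg; congr (_ + _)%N; apply: eq_bigr => i _; rewrite ffunE. Qed.

Unset Implicit Arguments.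

Theorem mainTheorem13 (R : realFieldType) (n d : nat)
    (c : mono n -> R) (q : mono n.+1 -> R) :
  (1 <= d)%N ->
  in_H d c ->
  homogeneous q d.-1 ->
  (forall M : mono n.+1, Pcoef d c M = SQcoef q M) ->
  connected (newton_support d q) /\
  newton_support d q [ffun _ => 0] /\
  has_size (newton_support d q) d%:Z.
Proof.
move=> d1 [cdeg [m0 [dm0 cm0]] cpos _] hom PQ.
have n0 : (0 < n)%N.
  case: (posnP n) => // e; move: d1; rewrite -dm0 /mdeg big1 // => i _.
  by move: (ltn_ord i); rewrite {2}e.
set K := newton_support d q.
set z : pt n := [ffun _ => 0].
pose reach (m : pt n) : Prop :=
  K z /\ exists s, [/\ path (@adjacent n) z s, last z s = m & all K s].
have reach_ext : forall x y, reach x -> K y -> adjacent x y -> reach y.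
  move=> x y [Kz [s [p1 l1 a1]]] Ky axy; split => //; exists (rcons s y).
  by rewrite rcons_path p1 l1 axy last_rcons all_rcons Ky a1.
pose G (N : mono n.+1) : R := if (q N != 0) && ~~ pb (reach (pt_of N)) then q N else 0.
have GqK : forall N, G N != 0 -> q N != 0 /\ ~ reach (pt_of N).
  move=> N; rewrite /G; case: ifP => [/andP [qN /pbP rN] _|]; last by rewrite eqxx.
  by [].
pose Tb (M : mono n.+1) := [exists j, (0 < M j)%N && (G (decr M j) != 0)].
have SG : forall M, SQcoef G M = if Tb M then Pcoef d c M else 0.
  move=> M; rewrite /Tb; case: existsP => [[k /andP [hk Gk]]|hT].
    rewrite PQ /SQcoef; apply: eq_bigr => j hj; rewrite /G.
    case: (eqVneq (q (decr M j)) 0) => [qj0|qj]; first by rewrite qj0.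
    rewrite /=; case: pbP => // rj.
    have [qk rk] := GqK _ Gk; exfalso; apply: rk.
    case: (eqVneq j k) => [<-//|jk].
    apply: (reach_ext _ _ rj); first by have [] := QB hom qk.
    exact: adj_decr.
  rewrite /SQcoef big1 // => j hj.
  case: (eqVneq (G (decr M j)) 0) => // Gj; exfalso; apply: hT; exists j; by rewrite hj Gj.
have hdeg : forall N, q N != 0 -> mdeg N = d.-1.
  by move=> N qN; apply/eqP; apply: contraNT qN => /hom ->.
have noX0 : forall M, Tb M -> mdeg (split0 M) != 0%N.
  move=> M /existsP [k /andP [hk Gk]]; apply/negP => /eqP m0'.
  have Mz : forall i, M (lift ord0 i) = 0%N.
    move=> i; apply/eqP; rewrite -leqn0 -m0'; have := le_mdeg (split0 M) i; by rewrite ffunE.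
  have ek : k = ord0 by case: (unliftP ord0 k) hk => [k' ->|//]; rewrite Mz.
  subst k.
  have [qN rN] := GqK _ Gk.
  have ez : pt_of (decr M ord0) = z by apply/ffunP=> i; rewrite /decr !ffunE /= Mz.
  apply: rN; rewrite ez; split; last by exists [::].
  by have [Kp _] := QB hom qN; rewrite ez in Kp.
have Lz : \sum_(b : {ffun 'I_n.+1 -> 'I_d.+1}) SQcoef G (tm b) * wt R b = 0.
  apply: LSG => N /GqK [qN _]; by rewrite hdeg // ltn_predL.
have wtE : forall b : {ffun 'I_n.+1 -> 'I_d.+1}, wt R b = (- n%:R) ^+ (tm b ord0).
  by move=> b; rewrite /wt /tm ffunE.
have Lsum : \sum_(b : {ffun 'I_n.+1 -> 'I_d.+1} | Tb (tm b)) Pcoef d c (tm b) * wt R b = 0.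
  rewrite big_mkcond /= -[RHS]Lz; apply: eq_bigr => b _; rewrite SG.
  by case: ifP; rewrite ?mul0r.
have term : forall M, Tb M -> (M ord0 + mdeg (split0 M) == d)%N ->
    Pcoef d c M * (- n%:R) ^+ (M ord0) = c (split0 M) * n%:R ^+ (M ord0).
  move=> M TM hc; rewrite /Pcoef hc (negbTE (noX0 M TM)) subr0.
  have -> : (d - mdeg (split0 M))%N = M ord0 by rewrite -(eqP hc) addnK.
  by rewrite -mulrA [c (split0 M) * _]mulrC mulrA -exprMn mulN1r opprK mulrC.
have nonneg : forall b : {ffun 'I_n.+1 -> 'I_d.+1}, Tb (tm b) -> 0 <= Pcoef d c (tm b) * wt R b.
  move=> b Tbb; rewrite wtE; case hc: (tm b ord0 + mdeg (split0 (tm b)) == d)%N.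
    by rewrite term // mulr_ge0 // exprn_ge0 // ler0n.
  by rewrite /Pcoef hc mul0r.
have Pz : forall M, Tb M -> Pcoef d c M = 0.
  move=> M TM; case hc: (M ord0 + mdeg (split0 M) == d)%N; last by rewrite /Pcoef hc.
  pose b : {ffun 'I_n.+1 -> 'I_d.+1} := [ffun i => inord (M i)].
  have eb : tm b = M.
    apply/ffunP => i; rewrite !ffunE inordK // ltnS -(eqP hc) -mdeg_split0.
    exact: le_mdeg.
  have := psumr_eq0P nonneg Lsum (i := b); rewrite eb wtE eb => /(_ TM).
  rewrite term // => /eqP; rewrite mulf_eq0 expf_eq0 pnatr_eq0 (gtn_eqF n0) andbF orbF.
  by move=> /eqP c0; rewrite /Pcoef hc c0 mulr0 (negbTE (noX0 M TM)) subr0.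
have SG0 : forall M, SQcoef G M = 0.
  by move=> M; rewrite SG; case: ifP => // /Pz.
have G0 : forall N, G N = 0.
  move=> N0; case: (eqVneq (G N0) 0) => // GN0; exfalso.
  pose P k := pb (exists N, G N != 0 /\ N ord0 = k).
  have exP : exists k, P k by exists (N0 ord0); apply/pbP; exists N0.
  have ubP : forall k, P k -> (k <= d)%N.
    move=> k /pbP [N [GN <-]]; have [qN _] := GqK _ GN.
    by rewrite (leq_trans (le_mdeg N ord0)) // hdeg // leq_pred.
  case: (ex_maxnP exP ubP) => k /pbP [N [GN Nk]] kmax.
  pose M : mono n.+1 := [ffun i => if i == ord0 then (N i).+1 else N i].
  have := SG0 M; rewrite /SQcoef (bigD1 ord0) /=; last by rewrite ffunE eqxx.
  have -> : decr M ord0 = N.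
    by apply/ffunP => i; rewrite !ffunE; case: eqP => [->|].
  rewrite big1 ?addr0; first by move/eqP; rewrite (negbTE GN).
  move=> j /andP [_ nj]; case: (eqVneq (G (decr M j)) 0) => // Gj; exfalso.
  have := kmax ((decr M j) ord0); rewrite !ffunE eq_sym (negbTE nj) eqxx -Nk ltnn.
  move=> h; suff: false by []; apply: h; apply/pbP; exists (decr M j); split => //; by rewrite !ffunE eq_sym (negbTE nj) eqxx.
have reachK : forall m, K m -> reach m.
  move=> m Km; have [_ _ qm pm] := QA Km.
  have := G0 (Qmono d m); rewrite /G qm /=; case: pbP => [r _|_ /eqP]; first by rewrite pm in r.
  by rewrite (negbTE qm).
pose M1 : mono n.+1 := [ffun i => if unlift ord0 i is Some j then m0 j else 0%N].
have M10 : M1 ord0 = 0%N by rewrite ffunE unlift_none.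
have sM1 : split0 M1 = m0 by apply/ffunP => i; rewrite !ffunE liftK.
have hS : SQcoef q M1 != 0.
  rewrite -PQ /Pcoef M10 sM1 dm0 add0n eqxx subnn expr0 mul1r (gtn_eqF d1).
  by rewrite subr0.
have [j /andP [hj qj]] : exists j, (0 < M1 j)%N && (q (decr M1 j) != 0).
  apply/existsP; move: hS; apply: contraTT => /existsPn h; rewrite negbK; apply/eqP.
  by apply: big1 => j hj; have := h j; rewrite hj /= => /negPn/eqP.
set N1 := decr M1 j.
have jn0 : j != ord0 by apply: contraTneq hj => ->; rewrite M10.
have [KN1 _] := QB hom qj.
have N10 : N1 ord0 = 0%N by rewrite /N1 /decr ffunE eq_sym (negbTE jn0) M10.
have pdN1 : pdeg (pt_of N1) = (d.-1)%:Z by rewrite pdeg_pt_of -(hdeg _ qj) mdegS N10 add0n.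
have Kz : K z by case: (reachK _ KN1).
split.
  move=> x y Kx Ky.
  have [_ [s1 [p1 l1 a1]]] := reachK _ Kx; have [_ [s2 [p2 l2 a2]]] := reachK _ Ky.
  have [s' [p' l' a']] := path_rev (P := K) (@adjacent_sym n) Kz p1 a1.
  rewrite l1 in p' l'.
  by exists (s' ++ s2); rewrite cat_path p' l' p2 last_cat l' l2 all_cat a' a2.
split => //.
exists (d.-1)%:Z, z; split.
- by exists (pt_of N1).
- by move=> m /QA [].
- move=> i; split; first by exists z.
  by move=> m /QA [h _ _ _]; rewrite ffunE; exact: h.
- have -> : pdeg z = 0 by rewrite /pdeg big1 // => i _; rewrite ffunE.
  by rewrite subr0 -[1]/(1%:Z) -PoszD addn1 prednK.
Qed.
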